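(* Let $N\equiv 3\pmod 4$ be a prime, let $C\in M_2(\mathbb Z)$ with $c:=\det C\neq 0$ and $(c,N)=1$. Choose integers $s,t$ with $sN+tc=1$ and put $X=tc\cdot C^{-1}$. Then for all $Q,T\in\mathscr S$, \[ K(Q,T;NC)=K(XQX^T,T;NI)\,K(s^2Q,T;C). \]
   Context: $\mathscr S$ is the set of symmetric positive definite half-integral $2\times2$ matrices with integral diagonal, $\Lambda$ the set of symmetric integral $2\times 2$ matrices, $I$ the $2\times 2$ identity. For $C'\in M_2(\mathbb Z)$ with $\det C'\neq 0$, $K(Q,T;C')=\sum_De(\mathrm{tr}(AC'^{-1}Q+C'^{-1}DT))$, where $D$ runs over $\{D\in M_2(\mathbb Z)\bmod C'\Lambda:\exists\begin{pmatrix}*&*\\C'&D\end{pmatrix}\in\mathrm{Sp}_4(\mathbb Z)\}$ and $A$ is any matrix with $\begin{pmatrix}A&*\\C'&D\end{pmatrix}\in\mathrm{Sp}_4(\mathbb Z)$; $e(x)=e^{2\pi ix}$. Note $X=t\cdot\mathrm{adj}(C)$ is integral. *)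

(* Defs.v *)
From HB Require Import structures.
From mathcomp Require Import all_boot all_order all_algebra.
From mathcomp Require Import boolp reals trigo.
From mathcomp Require Import complex.
From Stdlib Require ClassicalEpsilon.
Unset Printing Implicit Defensive.
Import Order.TTheory GRing.Theory Num.Theory.
Local Open Scope ring_scope.

Definition toQ {m n : nat} (A : 'M[int]_(m, n)) : 'M[rat]_(m, n) :=
  map_mx (fun z : int => z%:~R) A.

Definition J4 : 'M[int]_(2 + 2) := block_mx 0 1%:M (- 1%:M) 0.
Definition symplectic (M : 'M[int]_(2 + 2)) : bool := M^T *m J4 *m M == J4.

Definition completable (C D : 'M[int]_2) : Prop :=
  exists A B : 'M[int]_2, symplectic (block_mx A B C D).

(* "any matrix A" with (A *; C D) in Sp_4(Z): chosen by Hilbert epsilon *)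
Definition Acomp (C D : 'M[int]_2) : 'M[int]_2 :=
  ClassicalEpsilon.epsilon (inhabits 0) (fun A => exists B, symplectic (block_mx A B C D)).

Definition in_S (R : realType) (Q : 'M[rat]_2) : Prop :=
  Q^T = Q /\
  (forall i : 'I_2, Q i i \is a Num.int) /\
  (forall i j : 'I_2, 2 * Q i j \is a Num.int) /\
  (forall v : 'rV[R]_2, v != 0 ->
      0 < (v *m map_mx (fun q : rat => ratr q) Q *m v^T) 0 0).

Definition ee (R : realType) (x : rat) : R[i] :=
  Complex (cos (2 * pi * ratr x)) (sin (2 * pi * ratr x)).

(* A canonical system of representatives of D mod C Lambda:
   D ~ D' iff C^{-1}(D - D') in Lambda.  Every admissible D has
   C^{-1} D symmetric with entries in (1/|det C|) Z, so the classes are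
   represented exactly by D = C P with P = M / |det C|, M symmetric integral
   with entries in [0, |det C|). *)
Definition symm_of {n : nat} (m : 'I_n * 'I_n * 'I_n) : 'M[rat]_2 :=
  \matrix_(i < 2, j < 2)
    ((if i == j then (if i == 0 then m.1.1 : nat else m.2 : nat)
      else m.1.2 : nat)%:R / n%:R).

Notation Idx C :=
  ('I_`|\det C|%N * 'I_`|\det C|%N * 'I_`|\det C|%N)%type.

Definition Drat (C : 'M[int]_2) (m : Idx C) : 'M[rat]_2 := toQ C *m symm_of m.

Definition Dint (C : 'M[int]_2) (m : Idx C) : 'M[int]_2 := map_mx (fun q : rat => numq q) (Drat C m).

Definition admissible (C : 'M[int]_2) (m : Idx C) : Prop :=
  toQ (Dint C m) = Drat C m /\ completable C (Dint C m).

Definition K (R : realType) (Q T : 'M[rat]_2) (C : 'M[int]_2) : R[i] :=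
  \sum_(m : Idx C | `[< admissible C m >])
    ee R (\tr (toQ (Acomp C (Dint C m)) *m invmx (toQ C) *m Q
               + invmx (toQ C) *m toQ (Dint C m) *m T)).

(* Main.v *)
Require Import Defs.
From HB Require Import structures.
From mathcomp Require Import all_boot all_order all_algebra.
From mathcomp Require Import boolp reals trigo complex.
From mathcomp Require Import ring zify.
From Stdlib Require ClassicalEpsilon.
Import Order.TTheory GRing.Theory Num.Theory.
Local Open Scope ring_scope.

Definition o0 : 'I_2 := ord0.
Definition o1 : 'I_2 := ord_max.
Lemma sum2 (V : nmodType) (F : 'I_2 -> V) : \sum_(i < 2) F i = F o0 + F o1.
Proof. rewrite big_ord_recr big_ord_recr big_ord0 /= add0r. congr (F _ + F _); exact: val_inj. Qed.
Lemma ord2 (i : 'I_2) : i = o0 \/ i = o1.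
Proof. case: i => [[|[|//]]] Hi; [left|right]; exact: val_inj. Qed.

Ltac mx2 := apply/matrixP; let i := fresh "i" in let j := fresh "j" in intros i j;
  case: (ord2 i) => ->; case: (ord2 j) => ->;
  rewrite ?(mxE, sum2) /=.

Definition dt2 {R : pzRingType} (A : 'M[R]_2) := A o0 o0 * A o1 o1 - A o0 o1 * A o1 o0.

Lemma det2 (R : comPzRingType) (A : 'M[R]_2) : \det A = dt2 A.
Proof.
rewrite (expand_det_row _ o0) sum2 /cofactor !det_mx11 !mxE /dt2.
have -> : lift o0 ord0 = o1 by apply: val_inj.
have -> : lift o1 ord0 = o0 by apply: val_inj.
rewrite /= expr0 expr1 mul1r. ring.
Qed.

Definition adj2 {R : pzRingType} (A : 'M[R]_2) : 'M[R]_2 :=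
  \matrix_(i, j) (if i == o0 then (if j == o0 then A o1 o1 else - A o0 o1)
                  else (if j == o0 then - A o1 o0 else A o0 o0)).

Lemma inv2 (A : 'M[rat]_2) : dt2 A != 0 -> invmx A = (dt2 A)^-1 *: adj2 A.
Proof.
move=> hd.
have hu : A \in unitmx by rewrite unitmxE det2 unitfE.
have h1 : ((dt2 A)^-1 *: adj2 A) *m A = 1%:M.
  rewrite /adj2 /dt2 in hd *; mx2; field; exact: hd.
by rewrite -[invmx A]mul1mx -h1 -mulmxA mulmxV // mulmx1.
Qed.


Ltac bf hN hd := rewrite ?inv2 //; rewrite /adj2 /dt2 in hd *;
  mx2; field; try (by apply/andP; split); exact hd.

Lemma id4b (Cq R1 R2 P1 P2 : 'M[rat]_2) (N k : rat) :
  N != 0 -> dt2 Cq != 0 ->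
  let s := (1 - k) / N in
  let Ci := invmx Cq in
  let R' := (k *: Ci)^T *m R1 *m (k *: Ci) + (s ^+ 2) *: R2 in
  R' *m (N *: Cq) *m (P1 + P2) - (N^-1 *: Ci)^T =
   k *: ((k *: Ci)^T *m (N *: (R1 *m P1) - N^-1%:M))
   + (k *: Ci)^T *m (N *: R1) *m (k *: Ci) *m (Cq *m P2)
   + (s ^+ 2) *: (R2 *m Cq *m (N *: P1))
   + (s ^+ 2 * N) *: (R2 *m Cq *m P2 - Ci^T)
   - (2 * s * k) *: Ci^T.
Proof. move=> hN hd s Ci R'; rewrite /R' /Ci /s; bf hN hd. Qed.

Lemma id4a (Cq R1 R2 : 'M[rat]_2) (N k : rat) :
  N != 0 -> dt2 Cq != 0 ->
  let s := (1 - k) / N in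
  let Ci := invmx Cq in
  let R' := (k *: Ci)^T *m R1 *m (k *: Ci) + (s ^+ 2) *: R2 in
  R' *m (N *: Cq) = k *: ((k *: Ci)^T *m (N *: R1)) + (s ^+ 2 * N) *: (R2 *m Cq).
Proof. move=> hN hd s Ci R'; rewrite /R' /Ci /s; bf hN hd. Qed.

Lemma id1a (Cq P1 P' : 'M[rat]_2) (N t c : rat) :
  N != 0 -> dt2 Cq != 0 ->
  N *: P1 = N *: (P1 - (t * c) *: P') + t *: ((c *: invmx Cq) *m (N *: Cq *m P')).
Proof. move=> hN hd; bf hN hd. Qed.

Lemma id1c (Cq R' P1 P' : 'M[rat]_2) (N k : rat) :
  N != 0 -> dt2 Cq != 0 ->
  Cq^T *m R' *m Cq *m (N *: P1) - N^-1%:M =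
    k *: (Cq^T *m (R' *m (N *: Cq) *m P' - (N^-1 *: invmx Cq)^T))
    + Cq^T *m (R' *m (N *: Cq)) *m (P1 - k *: P') - ((1 - k) / N)%:M.
Proof. move=> hN hd; bf hN hd. Qed.

Lemma id2a (Cq P2 P' : 'M[rat]_2) (N s : rat) :
  Cq *m P2 = Cq *m (P2 - (s * N) *: P') + s *: (N *: Cq *m P').
Proof. mx2; ring. Qed.

Lemma id2c (Cq R' P2 P' : 'M[rat]_2) (N t c : rat) :
  N != 0 -> dt2 Cq != 0 ->
  let s := (1 - t * c) / N in
  (N ^+ 2 *: R') *m Cq *m P2 - (invmx Cq)^T =
    (s * N ^+ 2) *: (R' *m (N *: Cq) *m P' - (N^-1 *: invmx Cq)^T)
    + N *: (R' *m (N *: Cq) *m (P2 - (s * N) *: P'))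
    - t *: (c *: invmx Cq)^T.
Proof. move=> hN hd s; rewrite /s; bf hN hd. Qed.

Lemma ee_add (R : realType) (x y : rat) : ee R (x + y) = ee R x * ee R y.
Proof.
rewrite /ee rmorphD mulrDr cosD sinD.
rewrite {3}/GRing.mul /=.
congr Complex; ring.
Qed.

Lemma per_int (R : realType) (f : R -> R) (T : R) :
  periodic f T -> forall (a : R) (z : int), f (a + T *~ z) = f a.
Proof.
move=> hp a; case=> n.
  by rewrite -pmulrn (periodicn hp).
by rewrite NegzE mulrNz -[in RHS](subrK (T *~ n.+1) a) -pmulrn (periodicn hp).
Qed.

Lemma ee_int (R : realType) (x k : rat) : k \is a Num.int -> ee R (x + k) = ee R x.
Proof.
move=> /intrP [z ->].
rewrite /ee rmorphD mulrDr rmorph_int.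
have -> : 2 * pi * z%:~R = (pi *+ 2) *~ z :> R.
  rewrite -mulrzr; ring.
by rewrite (@per_int R _ _ (@cosD2pi R)) (@per_int R _ _ (@sinD2pi R)).
Qed.

Notation isZ M := (M \is a mxOver (Num.int : {pred rat})).

Lemma toQ_isZ m n (Z : 'M[int]_(m, n)) : isZ (toQ Z).
Proof. by apply/mxOverP => i j; rewrite mxE intr_int. Qed.

Lemma isZ_toQ m n (M : 'M[rat]_(m, n)) : isZ M -> toQ (map_mx numq M) = M.
Proof. move/mxOverP=> h; apply/matrixP=> i j; rewrite !mxE; exact: numqK. Qed.

Lemma isZ_tr m n (M : 'M[rat]_(m, n)) : isZ M -> isZ M^T.
Proof. move/mxOverP=> h; apply/mxOverP=> i j; rewrite mxE; exact: h. Qed.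

Lemma isZ_add m n (A B : 'M[rat]_(m, n)) : isZ A -> isZ B -> isZ (A + B).
Proof. move=> /mxOverP hA /mxOverP hB; apply/mxOverP=> i j; by rewrite mxE rpredD. Qed.

Lemma isZ_opp m n (A : 'M[rat]_(m, n)) : isZ A -> isZ (- A).
Proof. move=> /mxOverP hA; apply/mxOverP=> i j; by rewrite mxE rpredN. Qed.

Lemma isZ_sub m n (A B : 'M[rat]_(m, n)) : isZ A -> isZ B -> isZ (A - B).
Proof. by move=> hA hB; apply: isZ_add => //; apply: isZ_opp. Qed.

Lemma isZ_mul m n p (A : 'M[rat]_(m, n)) (B : 'M[rat]_(n, p)) : isZ A -> isZ B -> isZ (A *m B).
Proof. move=> hA hB; exact: mxOverM. Qed.

Lemma isZ_scale m n (k : rat) (A : 'M[rat]_(m, n)) : k \is a Num.int -> isZ A -> isZ (k *: A).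
Proof. move=> hk hA; exact: mxOverZ. Qed.

Lemma isZ_scalar n (k : rat) : k \is a Num.int -> isZ (k%:M : 'M[rat]_n).
Proof. move=> hk; apply: mxOver_scalar => //; exact: rpred0. Qed.

Lemma toQM m n p (A : 'M[int]_(m, n)) (B : 'M[int]_(n, p)) : toQ (A *m B) = toQ A *m toQ B.
Proof. exact: map_mxM. Qed.

Definition Jg (R : pzRingType) : 'M[R]_(2 + 2) := block_mx 0 1%:M (- 1%:M) 0.

Lemma symp_eq (R : comPzRingType) (A B C D : 'M[R]_2) :
  (block_mx A B C D)^T *m Jg R *m block_mx A B C D =
  block_mx (A^T *m C - C^T *m A) (A^T *m D - C^T *m B)
           (B^T *m C - D^T *m A) (B^T *m D - D^T *m B).
Proof.
rewrite tr_block_mx /Jg !mulmx_block !mulmx0 !mulmx1 !mulmxN !mulmx1 !addr0 !add0r.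
by rewrite !mulNmx ![- _ + _]addrC.
Qed.

Lemma symp_dual_eq (R : comPzRingType) (A B C D : 'M[R]_2) :
  block_mx A B C D *m Jg R *m (block_mx A B C D)^T =
  block_mx (A *m B^T - B *m A^T) (A *m D^T - B *m C^T)
           (C *m B^T - D *m A^T) (C *m D^T - D *m C^T).
Proof.
rewrite tr_block_mx /Jg !mulmx_block !mulmx0 !mulmx1 !mulmxN !mulmx1 !addr0 !add0r.
by rewrite !mulNmx ![- _ + _]addrC.
Qed.

Lemma JJ (R : comPzRingType) : Jg R *m Jg R = - 1%:M.
Proof.
rewrite /Jg mulmx_block !mulmx0 !mul0mx !mulmx1 !mulmxN !mulmx1 !addr0 !add0r.
by rewrite [1%:M in RHS](scalar_mx_block 2 2) opp_block_mx !oppr0.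
Qed.

Lemma toQ_inj m n (A B : 'M[int]_(m, n)) : toQ A = toQ B -> A = B.
Proof.
move/matrixP=> h; apply/matrixP=> i j; move: (h i j); rewrite !mxE; exact: intr_inj.
Qed.

Lemma J4E : J4 = Jg int. Proof. by []. Qed.

Lemma toQ_J : toQ (Jg int) = Jg rat.
Proof. by rewrite /toQ /Jg map_block_mx !map_mx0 map_mxN map_scalar_mx rmorph1. Qed.

Lemma toQ_tr m n (A : 'M[int]_(m, n)) : toQ A^T = (toQ A)^T.
Proof. by rewrite /toQ map_trmx. Qed.

Lemma toQ_block (A B C D : 'M[int]_2) : toQ (block_mx A B C D) = block_mx (toQ A) (toQ B) (toQ C) (toQ D).
Proof. by rewrite /toQ map_block_mx. Qed.

Lemma symp_rel (A B C D : 'M[int]_2) : symplectic (block_mx A B C D) ->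
  let Aq := toQ A in let Bq := toQ B in let Cq := toQ C in let Dq := toQ D in
  [/\ Aq^T *m Cq = Cq^T *m Aq, Aq^T *m Dq - Cq^T *m Bq = 1%:M & Dq *m Aq^T - Cq *m Bq^T = 1%:M].
Proof.
rewrite /symplectic J4E => /eqP h.
set M := block_mx A B C D in h.
have hW : (- (Jg int *m M^T *m Jg int)) *m M = 1%:M.
  by rewrite mulNmx -!mulmxA [M^T *m _]mulmxA h JJ opprK.
have hD : M *m Jg int *m M^T = Jg int.
  move/mulmx1C: hW; rewrite mulmxN !mulmxA => /eqP; rewrite eqr_oppLR => /eqP h2.
  have hJ : Jg int *m (- Jg int) = 1%:M by rewrite mulmxN JJ opprK.
  by rewrite -[LHS]mulmx1 -hJ mulmxA h2 mulNmx mul1mx opprK.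
move: h hD; rewrite /M symp_eq symp_dual_eq /Jg.
move=> /eq_block_mx [h1 h2 _ _] /eq_block_mx [_ _ h3 _].
split.
- by apply/eqP; rewrite -subr_eq0 -!toQ_tr -!toQM -rmorphB /= h1 /toQ map_mx0.
- by rewrite -!toQ_tr -!toQM -rmorphB /= h2 /toQ map_scalar_mx rmorph1.
- apply/eqP; rewrite -opprB eqr_oppLR; apply/eqP.
  by rewrite -!toQ_tr -!toQM -rmorphB /= h3 /toQ map_mxN map_scalar_mx rmorph1.
Qed.

Definition goodP (Cq P R : 'M[rat]_2) :=
  [/\ R^T = R, isZ (R *m Cq) & isZ (R *m Cq *m P - (invmx Cq)^T)].

Lemma trV (Cq : 'M[rat]_2) : Cq \in unitmx -> (invmx Cq)^T *m Cq^T = 1%:M.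
Proof. by move=> hu; rewrite -trmx_mul mulmxV // trmx1. Qed.

Lemma good_of_symp (A B C0 D0 : 'M[int]_2) (P : 'M[rat]_2) :
  symplectic (block_mx A B C0 D0) -> toQ C0 \in unitmx -> toQ D0 = toQ C0 *m P ->
  goodP (toQ C0) P (toQ A *m invmx (toQ C0)).
Proof.
move=> /symp_rel [h1 h2 _] hu hD.
set Aq := toQ A in h1 h2 *; set Cq := toQ C0 in hu hD h1 h2 *.
have hR : (Aq *m invmx Cq)^T = Aq *m invmx Cq.
  rewrite trmx_mul -[LHS]mulmx1 -(mulmxV hu) !mulmxA -[_ *m Aq^T *m Cq]mulmxA h1.
  by rewrite !mulmxA trV // mul1mx.
split => //.
- by rewrite -mulmxA mulVmx // mulmx1 toQ_isZ.
- have -> : Aq *m invmx Cq *m Cq *m P - (invmx Cq)^T = toQ B.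
    rewrite -mulmxA -hD -hR trmx_mul -mulmxA -[X in _ - X]mulmx1.
    rewrite -mulmxBr.
    have -> : Aq^T *m toQ D0 - 1%:M = Cq^T *m toQ B.
      by rewrite -h2 opprB addrC subrK.
    by rewrite mulmxA trV // mul1mx.
  exact: toQ_isZ.
Qed.

Ltac bfx hd := rewrite ?inv2 //; rewrite /adj2 /dt2 in hd *;
  mx2; field; rewrite ?hd ?andbT //.

Definition symmx (M : 'M[rat]_2) : 'M[rat]_2 := \matrix_(i, j)
  (if i == o0 then (if j == o0 then M o0 o0 else M o0 o1)
   else (if j == o0 then M o0 o1 else M o1 o1)).

Lemma symS (M : 'M[rat]_2) : M^T = M -> M = symmx M.
Proof.
move=> h; mx2 => //. by rewrite -[in LHS]h mxE.
Qed.

Lemma dt2_unit (Cq : 'M[rat]_2) : Cq \in unitmx -> dt2 Cq != 0.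
Proof. by rewrite unitmxE det2 unitfE. Qed.

Lemma symp_blocks (Cq P R : 'M[rat]_2) : dt2 Cq != 0 -> R^T = R -> P^T = P ->
  let A := R *m Cq in let B := R *m Cq *m P - (invmx Cq)^T in let D := Cq *m P in
  block_mx (A^T *m Cq - Cq^T *m A) (A^T *m D - Cq^T *m B)
           (B^T *m Cq - D^T *m A) (B^T *m D - D^T *m B) = Jg rat.
Proof.
move=> hd hR hP A B D; rewrite /A /B /D /Jg.
rewrite (symS R hR) (symS P hP) /symmx.
congr block_mx; bfx hd.
Qed.

Lemma symp_of_good (C0 D0 : 'M[int]_2) (P R : 'M[rat]_2) :
  toQ C0 \in unitmx -> toQ D0 = toQ C0 *m P -> P^T = P ->
  goodP (toQ C0) P R -> completable C0 D0.
Proof.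
move=> hu hD hP [hR hA hB].
exists (map_mx numq (R *m toQ C0)), (map_mx numq (R *m toQ C0 *m P - (invmx (toQ C0))^T)).
apply/eqP/toQ_inj; rewrite !toQM [toQ J4]toQ_J toQ_tr !toQ_block !isZ_toQ //.
rewrite symp_eq hD.
exact: (@symp_blocks _ P R (dt2_unit _ hu) hR hP).
Qed.

Arguments good_of_symp {A B C0 D0 P}.
Arguments symp_rel {A B C D}.

Lemma indep (A B C0 D0 : 'M[int]_2) (P R : 'M[rat]_2) :
  symplectic (block_mx A B C0 D0) -> toQ C0 \in unitmx -> toQ D0 = toQ C0 *m P ->
  goodP (toQ C0) P R -> isZ (R - toQ A *m invmx (toQ C0)).
Proof.
move=> hs hu hD hg.
have [_ h0C h0D] := good_of_symp hs hu hD.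
have [_ _ h3] := symp_rel hs.
case: hg => _ hC hDD.
set U := R - _.
have hUC : isZ (U *m toQ C0).
  by rewrite /U mulmxBl; apply: isZ_sub.
have hUD : isZ (U *m toQ D0).
  have -> : U *m toQ D0 = (R *m toQ C0 *m P - (invmx (toQ C0))^T)
       - (toQ A *m invmx (toQ C0) *m toQ C0 *m P - (invmx (toQ C0))^T).
    by rewrite /U hD mulmxBl !mulmxA opprB addrA subrK.
  by apply: isZ_sub.
rewrite -[U]mulmx1 -h3 mulmxBr !mulmxA; apply: isZ_sub; apply: isZ_mul => //;
  apply: isZ_tr; exact: toQ_isZ.
Qed.

Definition halfint (Q : 'M[rat]_2) :=
  forall S : 'M[rat]_2, S^T = S -> isZ S -> \tr (S *m Q) \is a Num.int.

Lemma trE2 (A : 'M[rat]_2) : \tr A = A o0 o0 + A o1 o1.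
Proof. by rewrite /mxtrace sum2. Qed.

Lemma trsym {M : 'M[rat]_2} : M^T = M -> M o1 o0 = M o0 o1.
Proof. by move=> h; rewrite -[in LHS]h mxE. Qed.

Lemma halfint_of_inS (R : realType) Q : in_S R Q -> halfint Q.
Proof.
case=> hQ [hd [h2 _]] S hS /mxOverP hZ.
rewrite trE2 !mxE !sum2 (trsym hS) (trsym hQ).
have -> : S o0 o0 * Q o0 o0 + S o0 o1 * Q o0 o1 + (S o0 o1 * Q o0 o1 + S o1 o1 * Q o1 o1)
   = S o0 o0 * Q o0 o0 + S o1 o1 * Q o1 o1 + S o0 o1 * (2 * Q o0 o1) by ring.
apply: rpredD; [apply: rpredD|]; apply: rpredM => //.
Qed.

Lemma halfint_conj X Q : isZ X -> halfint Q -> halfint (X *m Q *m X^T).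
Proof.
move=> hX hQ S hS hSZ.
rewrite !mulmxA mxtrace_mulC !mulmxA.
apply: hQ.
  by rewrite !trmx_mul trmxK hS mulmxA.
by apply: isZ_mul => //; apply: isZ_mul => //; apply: isZ_tr.
Qed.

Lemma halfint_scale k Q : k \is a Num.int -> halfint Q -> halfint (k *: Q).
Proof.
move=> hk hQ S hS hSZ; rewrite -scalemxAr mxtraceZ rpredM //; exact: hQ.
Qed.

Lemma unit_toQ (C0 : 'M[int]_2) : \det C0 != 0 -> toQ C0 \in unitmx.
Proof. by move=> h; rewrite unitmxE /toQ det_map_mx unitfE intr_eq0. Qed.

Lemma symm_of_sym n (m : 'I_n * 'I_n * 'I_n) : (symm_of m)^T = symm_of m.
Proof. apply/matrixP=> i j; rewrite !mxE; case: (ord2 i) => ->; case: (ord2 j) => ->//. Qed.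

Arguments unit_toQ {C0}.
Arguments indep {A B C0 D0 P R}.
Arguments symp_of_good {C0 D0 P R}.

Lemma phase (R : realType) (C0 : 'M[int]_2) (m : Idx C0) (Q T Rm : 'M[rat]_2) :
  \det C0 != 0 -> admissible C0 m -> goodP (toQ C0) (symm_of m) Rm ->
  halfint Q ->
  ee R (\tr (toQ (Acomp C0 (Dint C0 m)) *m invmx (toQ C0) *m Q
             + invmx (toQ C0) *m toQ (Dint C0 m) *m T))
  = ee R (\tr (Rm *m Q) + \tr (symm_of m *m T)).
Proof.
move=> hdet [hD hc] hg hQ.
have hu := unit_toQ hdet.
have hD' : toQ (Dint C0 m) = toQ C0 *m symm_of m by rewrite hD.
have [B hB] : exists B, symplectic (block_mx (Acomp C0 (Dint C0 m)) B C0 (Dint C0 m)).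
  rewrite /Acomp; apply: (ClassicalEpsilon.epsilon_spec (inhabits 0)
     (fun A => exists B, symplectic (block_mx A B C0 (Dint C0 m)))).
  by case: hc => A [B hB]; exists A, B.
have hI := indep hB hu hD' hg.
have [hR0 _ _] := good_of_symp hB hu hD'.
case: hg => hR _ _.
set R0 := toQ (Acomp C0 (Dint C0 m)) *m invmx (toQ C0) in hI hR0 *.
rewrite hD' mulmxA mulVmx // mul1mx.
have -> : \tr (Rm *m Q) + \tr (symm_of m *m T)
   = \tr (R0 *m Q + symm_of m *m T) + \tr ((Rm - R0) *m Q).
  rewrite mulmxBl linearB /= mxtraceD; ring.
rewrite ee_int //; apply: hQ => //.
by rewrite linearB /= hR hR0.
Qed.

Definition omod (n : nat) (Hn : (0 < n)%N) (q : rat) : 'I_n :=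
  Ordinal (ltn_pmod `|(numq (n%:R * q) %% n%:Z)%Z|%N Hn).

Arguments omod {n} : simpl never.

Lemma natrQ (k : nat) : (k%:R : rat) = (k%:Z)%:~R.
Proof. by []. Qed.

Lemma omodE n (Hn : (0 < n)%N) q : (n%:R * q) \is a Num.int ->
  ((omod Hn q : nat)%:R / n%:R : rat) - q \is a Num.int.
Proof.
move=> hq; rewrite /omod /=.
set z := numq (n%:R * q).
have hz : (z%:~R : rat) = n%:R * q by rewrite /z numqK.
have hn0 : (n%:R : rat) != 0 by rewrite pnatr_eq0 -lt0n.
have hnz : (n%:Z != 0) by rewrite eqz_nat -lt0n.
have hge := modz_ge0 z hnz.
have hlt : ((z %% n)%Z < n%:Z) by apply: ltz_pmod; rewrite ltz_nat.
have hv : (`|(z %% n)%Z| %% n)%N = `|(z %% n)%Z|%N.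
  by apply: modn_small; rewrite -ltz_nat gez0_abs.
rewrite hv natr_absz ger0_norm //.
have -> : q = z%:~R / n%:R by rewrite hz [_ * q]mulrC mulfK.
rewrite -mulrBl.
have -> : (z %% n)%Z = z - (z %/ n)%Z * n by rewrite {2}(divz_eq z n) addrC addKr.
rewrite rmorphB /= addrAC subrr add0r rmorphM /= -mulNr mulfK //.
by rewrite rpredN intr_int.
Qed.

Lemma ord_uniq {n} {x y : 'I_n} :
  ((x : nat)%:R / n%:R - (y : nat)%:R / n%:R : rat) \is a Num.int -> x = y.
Proof.
have hn : (0 < n)%N by case: x => x' /= h; apply: leq_ltn_trans h.
have hn0 : (n%:R : rat) != 0 by rewrite pnatr_eq0 -lt0n.
move=> /intrP [k hk].
have hk2 : ((x : nat)%:Z - (y : nat)%:Z) = k * n%:Z.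
  apply: (intr_inj (R := rat)).
  rewrite rmorphB rmorphM /= -!natrQ -hk -mulrBl mulfVK //.
apply: val_inj => /=.
have hx := ltn_ord x; have hy := ltn_ord y.
move: hk2 hx hy; set a := (x : nat); set b := (y : nat) => hk2 hx hy.
have [hk0|[hk0|hk0]] : (k = 0 \/ 1 <= k \/ k <= -1)%R by lia.
- by move: hk2; rewrite hk0 mul0r; lia.
- have : (n%:Z <= k * n%:Z)%R by rewrite -{1}[n%:Z]mul1r ler_wpM2r.
  lia.
- have : (k * n%:Z <= - n%:Z)%R by rewrite -mulN1r ler_wpM2r.
  lia.
Qed.

Lemma symm_ofE n (m : 'I_n * 'I_n * 'I_n) :
  [/\ symm_of m o0 o0 = (m.1.1 : nat)%:R / n%:R,
      symm_of m o0 o1 = (m.1.2 : nat)%:R / n%:R,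
      symm_of m o1 o0 = (m.1.2 : nat)%:R / n%:R &
      symm_of m o1 o1 = (m.2 : nat)%:R / n%:R].
Proof. by rewrite !mxE. Qed.

Lemma symm_uniq n (m m' : 'I_n * 'I_n * 'I_n) :
  isZ (symm_of m - symm_of m') -> m = m'.
Proof.
move=> /mxOverP h.
have h00 := h o0 o0; have h01 := h o0 o1; have h11 := h o1 o1.
rewrite !mxE in h00 h01 h11.
move: h00 h01 h11; clear h; case: m => [[a b] d]; case: m' => [[a' b'] d'] /= h00 h01 h11.
by rewrite (ord_uniq h00) (ord_uniq h01) (ord_uniq h11).
Qed.

Definition omat n (Hn : (0 < n)%N) (P : 'M[rat]_2) : 'I_n * 'I_n * 'I_n :=
  (omod Hn (P o0 o0), omod Hn (P o0 o1), omod Hn (P o1 o1)).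
Arguments omat {n}.

Lemma omatE n (Hn : (0 < n)%N) (P : 'M[rat]_2) : P^T = P -> isZ (n%:R *: P) ->
  isZ (symm_of (omat Hn P) - P).
Proof.
move=> hP /mxOverP hZ; apply/mxOverP => i j.
have e := fun i j => hZ i j; rewrite /= in e.
case: (ord2 i) => ->; case: (ord2 j) => ->; rewrite !mxE /=.
- by apply: omodE; move: (e o0 o0); rewrite mxE.
- by apply: omodE; move: (e o0 o1); rewrite mxE.
- by rewrite (trsym hP); apply: omodE; move: (e o0 o1); rewrite mxE.
- by apply: omodE; move: (e o1 o1); rewrite mxE.
Qed.

Lemma symm_nZ n (m : 'I_n * 'I_n * 'I_n) : (0 < n)%N -> isZ (n%:R *: symm_of m).
Proof.
move=> hn; have hn0 : (n%:R : rat) != 0 by rewrite pnatr_eq0 -lt0n.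
apply/mxOverP => i j; rewrite !mxE mulrC mulfVK //.
Qed.

Lemma adm_iff (C0 : 'M[int]_2) (m : Idx C0) : \det C0 != 0 ->
  admissible C0 m <->
  (isZ (toQ C0 *m symm_of m) /\ exists R, goodP (toQ C0) (symm_of m) R).
Proof.
move=> hdet; have hu := unit_toQ hdet; split.
- case=> hD [A [B hs]].
  have hD' : toQ (Dint C0 m) = toQ C0 *m symm_of m by rewrite hD.
  split; first by rewrite -hD' toQ_isZ.
  by exists (toQ A *m invmx (toQ C0)); exact: good_of_symp hs hu hD'.
- case=> hZ [R hg].
  have hD : toQ (Dint C0 m) = Drat C0 m by rewrite /Dint isZ_toQ.
  split => //.
  have hD' : toQ (Dint C0 m) = toQ C0 *m symm_of m by rewrite hD.
  exact: (@symp_of_good C0 (Dint C0 m) (symm_of m) R hu hD' (symm_of_sym _ m) hg).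
Qed.

Lemma good_shift (Cq P E R : 'M[rat]_2) : goodP Cq P R -> isZ E -> goodP Cq (P + E) R.
Proof.
case=> h1 h2 h3 hE; split => //.
rewrite mulmxDr addrAC; apply: isZ_add => //; exact: isZ_mul.
Qed.

Lemma unitZ (Cq : 'M[rat]_2) (a : rat) : Cq \in unitmx -> a != 0 -> a *: Cq \in unitmx.
Proof.
move=> hu ha; move: hu; rewrite !unitmxE detZ !unitfE => h.
by rewrite mulf_neq0 // expf_neq0.
Qed.

Lemma trZ (a : rat) (M : 'M[rat]_2) : (a *: M)^T = a *: M^T.
Proof. by rewrite linearZ. Qed.

Section Parts.
Variables (Cq : 'M[rat]_2) (N' tq sq c : rat).
Hypotheses (hu : Cq \in unitmx) (hN : N' != 0) (hNZ : N' \is a Num.int)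
  (htq : tq \is a Num.int) (hsq : sq \is a Num.int) (hcZ : c \is a Num.int)
  (hCq : isZ Cq) (hCa : isZ (c *: invmx Cq)) (hst : sq * N' + tq * c = 1).

Let hd : dt2 Cq != 0 := dt2_unit _ hu.
Let hsE : sq = (1 - tq * c) / N'.
Proof. by rewrite -hst addrK mulfK. Qed.
Let hkZ : isZ ((tq * c) *: invmx Cq).
Proof. by rewrite -scalerA; apply: isZ_scale. Qed.
Let hinvN : invmx (N' *: Cq) = N'^-1 *: invmx Cq.
Proof. by rewrite invmxZ // unitZ. Qed.

Lemma part4 (S1 S2 S' R1 R2 : 'M[rat]_2) :
  isZ (N'%:M *m S1) -> goodP N'%:M S1 R1 -> isZ (Cq *m S2) -> goodP Cq S2 R2 ->
  isZ (S' - (S1 + S2)) ->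
  let R' := ((tq * c) *: invmx Cq)^T *m R1 *m ((tq * c) *: invmx Cq) + sq ^+ 2 *: R2 in
  isZ ((N' *: Cq) *m S') /\ goodP (N' *: Cq) S' R'.
Proof.
move=> hZ1 [hR1s hR1C hR1P] hZ2 [hR2s hR2C hR2P] hE R'.
split.
  have -> : (N' *: Cq) *m S' = Cq *m (N'%:M *m S1) + N' *: (Cq *m S2) + (N' *: Cq) *m (S' - (S1 + S2)).
    by mx2; ring.
  apply: isZ_add; [apply: isZ_add|].
  - exact: isZ_mul.
  - exact: isZ_scale.
  - by apply: isZ_mul => //; apply: isZ_scale.
have -> : S' = (S1 + S2) + (S' - (S1 + S2)) by rewrite addrC subrK.
apply: good_shift => //.
split.
- by rewrite /R' linearD /= !trmx_mul trmxK hR1s (trZ _ R2) hR2s mulmxA.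
- rewrite /R' hsE id4a // -hsE; apply: isZ_add; apply: isZ_scale.
  + by rewrite rpredM.
  + by apply: isZ_mul; [apply: isZ_tr | rewrite -mul_mx_scalar].
  + by rewrite rpredM // rpredX.
  + done.
- rewrite /R' hinvN hsE id4b // -hsE.
  apply: isZ_sub; [apply: isZ_add; [apply: isZ_add; [apply: isZ_add|]|]|].
  + apply: isZ_scale; first by rewrite rpredM.
    apply: isZ_mul; first exact: isZ_tr.
    move: hR1P; rewrite invmx_scalar tr_scalar_mx mul_mx_scalar -scalemxAl.
    by rewrite scalemxAl.
  + apply: isZ_mul => //; apply: isZ_mul => //; apply: isZ_mul => //.
      exact: isZ_tr.
    by rewrite -mul_mx_scalar.
  + apply: isZ_scale; first by rewrite rpredX.
    by apply: isZ_mul => //; rewrite -mul_scalar_mx.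
  + by apply: isZ_scale => //; rewrite rpredM // rpredX.
  + have -> : (2 * sq * (tq * c)) *: (invmx Cq)^T = (2 * sq * tq) *: (c *: invmx Cq)^T.
      by rewrite trZ scalerA mulrA.
    apply: isZ_scale; first by rewrite !rpredM.
    exact: isZ_tr.
Qed.

Lemma part1 (S' R' S1 : 'M[rat]_2) :
  goodP (N' *: Cq) S' R' -> isZ ((N' *: Cq) *m S') -> isZ (S1 - (tq * c) *: S') ->
  isZ (N'%:M *m S1) /\ goodP N'%:M S1 (Cq^T *m R' *m Cq).
Proof.
move=> [hs hC hP] hZ hE; rewrite hinvN in hP; split.
  rewrite mul_scalar_mx (@id1a Cq S1 S' N' tq c hN hd).
  apply: isZ_add; apply: isZ_scale => //; exact: isZ_mul.
split.
- by rewrite !trmx_mul trmxK hs mulmxA.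
- have -> : Cq^T *m R' *m Cq *m N'%:M = Cq^T *m (R' *m (N' *: Cq)) by mx2; ring.
  by apply: isZ_mul => //; apply: isZ_tr.
- rewrite invmx_scalar tr_scalar_mx.
  have -> : Cq^T *m R' *m Cq *m N'%:M *m S1 = Cq^T *m R' *m Cq *m (N' *: S1) by mx2; ring.
  rewrite (@id1c Cq R' S1 S' N' (tq * c) hN hd) -hsE.
  apply: isZ_sub; last by apply: isZ_scalar.
  apply: isZ_add.
    by apply: isZ_scale; [rewrite rpredM | apply: isZ_mul => //; apply: isZ_tr].
  by apply: isZ_mul => //; apply: isZ_mul => //; apply: isZ_tr.
Qed.

Lemma part2 (S' R' S2 : 'M[rat]_2) :
  goodP (N' *: Cq) S' R' -> isZ ((N' *: Cq) *m S') -> isZ (S2 - (sq * N') *: S') ->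
  isZ (Cq *m S2) /\ goodP Cq S2 (N' ^+ 2 *: R').
Proof.
move=> [hs hC hP] hZ hE; rewrite hinvN in hP; split.
  rewrite (@id2a Cq S2 S' N' sq).
  by apply: isZ_add; [apply: isZ_mul | apply: isZ_scale].
split.
- by rewrite trZ hs.
- have -> : N' ^+ 2 *: R' *m Cq = N' *: (R' *m (N' *: Cq)) by mx2; ring.
  exact: isZ_scale.
- have := @id2c Cq R' S2 S' N' tq c hN hd; rewrite /= -hsE => ->.
  apply: isZ_sub; last by apply: isZ_scale => //; apply: isZ_tr.
  apply: isZ_add; apply: isZ_scale.
  + by rewrite rpredM // rpredX.
  + done.
  + done.
  + exact: isZ_mul.
Qed.

Ltac bfy := rewrite ?inv2 //; have := hd; rewrite /adj2 /dt2 => ?;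
  mx2; field; rewrite ?hN ?andbT /=; try assumption.

Lemma part5a (S1 S2 S' A1 : 'M[rat]_2) :
  isZ (N'%:M *m S1) -> isZ (Cq *m S2) -> isZ (S' - (S1 + S2)) ->
  isZ (A1 - (tq * c) *: S') -> isZ (A1 - S1).
Proof.
move=> h1 h2 h3 h4.
have -> : A1 - S1 = (A1 - (tq * c) *: S') + (tq * c) *: (S' - (S1 + S2))
   - sq *: (N'%:M *m S1) + tq *: ((c *: invmx Cq) *m (Cq *m S2)).
  rewrite hsE; bfy.
apply: isZ_add; [apply: isZ_sub; [apply: isZ_add|]|].
- done.
- by apply: isZ_scale => //; rewrite rpredM.
- exact: isZ_scale.
- by apply: isZ_scale => //; apply: isZ_mul.
Qed.

Lemma part5b (S1 S2 S' A2 : 'M[rat]_2) :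
  isZ (N'%:M *m S1) -> isZ (Cq *m S2) -> isZ (S' - (S1 + S2)) ->
  isZ (A2 - (sq * N') *: S') -> isZ (A2 - S2).
Proof.
move=> h1 h2 h3 h4.
have -> : A2 - S2 = (A2 - (sq * N') *: S') + (sq * N') *: (S' - (S1 + S2))
   + sq *: (N'%:M *m S1) - tq *: ((c *: invmx Cq) *m (Cq *m S2)).
  rewrite hsE; bfy.
apply: isZ_sub; [apply: isZ_add; [apply: isZ_add|]|].
- done.
- by apply: isZ_scale => //; rewrite rpredM.
- exact: isZ_scale.
- by apply: isZ_scale => //; apply: isZ_mul.
Qed.

Lemma part3 (M S' A1 A2 : 'M[rat]_2) :
  isZ (M - (A1 + A2)) -> isZ (A1 - (tq * c) *: S') -> isZ (A2 - (sq * N') *: S') ->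
  isZ (M - S').
Proof.
move=> h1 h2 h3.
have -> : M - S' = (M - (A1 + A2)) + (A1 - (tq * c) *: S') + (A2 - (sq * N') *: S').
  rewrite hsE; mx2; field; exact: hN.
by apply: isZ_add => //; apply: isZ_add.
Qed.
End Parts.

Lemma trace_split (Q T R1 R2 S1 S2 S' X : 'M[rat]_2) (sq : rat) :
  \tr ((X^T *m R1 *m X + sq ^+ 2 *: R2) *m Q) + \tr (S' *m T) =
  (\tr (R1 *m (X *m Q *m X^T)) + \tr (S1 *m T)) + (\tr (R2 *m (sq ^+ 2 *: Q)) + \tr (S2 *m T))
  + \tr ((S' - (S1 + S2)) *m T).
Proof. rewrite !trE2 ?(mxE, sum2) /=; ring. Qed.


Lemma sg_int (x : rat) : x != 0 -> x / `|x| \is a Num.int /\ `|x| / x \is a Num.int.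
Proof.
move=> hx.
have hn : `|x| != 0 by rewrite normr_eq0.
have e1 : x / `|x| = Num.sg x by rewrite -{1}(mulr_sg_norm x) mulfK.
have e2 : `|x| / x = Num.sg x by rewrite -invf_div e1 invr_sg.
have hs : Num.sg x \is a Num.int by case: sgrP => _; rewrite ?rpred0 ?rpred1 ?rpredN1.
by rewrite e1 e2.
Qed.

Theorem lemma6 (R : realType) (N : nat) (C : 'M[int]_2) (s t : int)
    (Q T : 'M[rat]_2) :
  prime N -> (N %% 4 = 3)%N ->
  \det C != 0 -> coprime `|\det C| N ->
  s * N%:Z + t * \det C = 1 ->
  in_S R Q -> in_S R T ->
  let X : 'M[rat]_2 := ((t * \det C)%:~R : rat) *: invmx (toQ C) in
  K R Q T (N%:Z *: C) =
    K R (X *m Q *m X^T) T (N%:Z)%:M * K R ((s ^+ 2)%:~R *: Q) T C.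
Proof.
move=> hp _ hdet _ hst hQS hTS X.
have hQ := halfint_of_inS _ _ hQS; have hT := halfint_of_inS _ _ hTS.
have hN0 : (0 < N)%N := prime_gt0 hp.
set Cq := toQ C.
set c : rat := (\det C)%:~R.
set N' : rat := N%:R.
set tq : rat := t%:~R.
set sq : rat := s%:~R.
have hN : N' != 0 by rewrite pnatr_eq0 -lt0n.
have hNZ : N' \is a Num.int by rewrite /N' natrQ intr_int.
have htq : tq \is a Num.int by apply: intr_int.
have hsq : sq \is a Num.int by apply: intr_int.
have hcZ : c \is a Num.int by apply: intr_int.
have hc0 : c != 0 by rewrite intr_eq0.
have hu : Cq \in unitmx := unit_toQ hdet.
have hd : dt2 Cq != 0 := dt2_unit _ hu.
have hCq : isZ Cq by apply: toQ_isZ.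
have hdetq : \det Cq = c by rewrite /Cq /toQ det_map_mx.
have hCa : isZ (c *: invmx Cq).
  by rewrite /invmx hu scalerA hdetq mulfV // scale1r /Cq /toQ -map_mx_adj toQ_isZ.
have hstq : sq * N' + tq * c = 1.
  have := congr1 (fun z : int => (z%:~R : rat)) hst.
  by rewrite /= rmorphD !rmorphM /= rmorph1.
have hN0z : (N%:Z != 0) by rewrite eqz_nat -lt0n.
have hdet3 : \det (N%:Z *: C) != 0 by rewrite detZ mulf_neq0 // expf_neq0.
have hdet1 : \det ((N%:Z)%:M : 'M[int]_2) != 0 by rewrite det_scalar expf_neq0.
have toQ3 : toQ (N%:Z *: C) = N' *: Cq by rewrite /toQ map_mxZ.
have toQ1 : toQ ((N%:Z)%:M : 'M[int]_2) = N'%:M by rewrite /toQ map_scalar_mx.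
have hX : X = (tq * c) *: invmx Cq by rewrite /X rmorphM.

set n := `|\det C|%N.
set n1 := `|\det ((N%:Z)%:M : 'M[int]_2)|%N.
set nb := `|\det (N%:Z *: C)|%N.
have Hn : (0 < n)%N by rewrite absz_gt0.
have Hn1 : (0 < n1)%N by rewrite absz_gt0.
have Hnb : (0 < nb)%N by rewrite absz_gt0.
have enR : (n%:R : rat) = `|c| by rewrite /n natr_absz intr_norm.
have en1R : (n1%:R : rat) = N' ^+ 2.
  by rewrite /n1 natr_absz intr_norm det_scalar rmorphXn /= ger0_norm // exprn_ge0.
have enbR : (nb%:R : rat) = N' ^+ 2 * `|c|.
  by rewrite /nb natr_absz intr_norm detZ rmorphM rmorphXn /= normrM ger0_norm // exprn_ge0.
have [hsg1 hsg2] := sg_int _ hc0.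
have hnc : `|c| != 0 by rewrite normr_eq0.
pose h (j : Idx ((N%:Z)%:M : 'M[int]_2) * Idx C) : Idx (N%:Z *: C) :=
  omat Hnb (symm_of j.1 + symm_of j.2).
pose h' (m : Idx (N%:Z *: C)) : Idx ((N%:Z)%:M : 'M[int]_2) * Idx C :=
  (omat Hn1 ((tq * c) *: symm_of m), omat Hn ((sq * N') *: symm_of m)).
have I1 : forall j : Idx ((N%:Z)%:M : 'M[int]_2) * Idx C,
    isZ (nb%:R *: (symm_of j.1 + symm_of j.2)).
  move=> j; rewrite scalerDr.
  have -> : (nb%:R : rat) *: symm_of j.1 = `|c| *: (n1%:R *: symm_of j.1).
    by rewrite scalerA enbR en1R mulrC.
  have -> : (nb%:R : rat) *: symm_of j.2 = N' ^+ 2 *: (n%:R *: symm_of j.2).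
    by rewrite scalerA enbR enR.
  apply: isZ_add; apply: isZ_scale; rewrite ?rpredX //; try exact: symm_nZ.
  by rewrite -enR natrQ intr_int.
have I2 : forall m : Idx (N%:Z *: C), isZ (n1%:R *: ((tq * c) *: symm_of m)).
  move=> m.
  have -> : (n1%:R : rat) *: ((tq * c) *: symm_of m) = (tq * (c / `|c|)) *: (nb%:R *: symm_of m).
    rewrite !scalerA en1R enbR; congr (_ *: _); field; exact: hnc.
  apply: isZ_scale; first by rewrite rpredM.
  exact: symm_nZ.
have I3 : forall m : Idx (N%:Z *: C), isZ ((N' *: Cq) *m symm_of m) ->
    isZ (n%:R *: ((sq * N') *: symm_of m)).
  move=> m hm.
  have -> : (n%:R : rat) *: ((sq * N') *: symm_of m) =
      (sq * (`|c| / c)) *: ((c *: invmx Cq) *m ((N' *: Cq) *m symm_of m)).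
    rewrite enR -!scalemxAl -scalemxAr mulmxA mulVmx // mul1mx !scalerA.
    congr (_ *: _); field; exact: hc0.
  apply: isZ_scale; first by rewrite rpredM.
  exact: isZ_mul.

have P1 := @part1 Cq N' tq sq c hu hN hNZ htq hsq hcZ hCq hCa hstq.
have P2 := @part2 Cq N' tq sq c hu hN hNZ htq hsq hCq hCa hstq.
have P4 := @part4 Cq N' tq sq c hu hN hNZ htq hsq hcZ hCq hCa hstq.
have P5a := @part5a Cq N' tq sq c hu hN htq hsq hcZ hCa hstq.
have P5b := @part5b Cq N' tq sq c hu hN hNZ htq hsq hCa hstq.
have P3 := @part3 N' tq sq c hN hstq.
have A3 : forall m : Idx (N%:Z *: C), admissible (N%:Z *: C) m <->
    (isZ ((N' *: Cq) *m symm_of m) /\ exists R0, goodP (N' *: Cq) (symm_of m) R0).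
  by move=> m; rewrite -toQ3; exact: (adm_iff _ m hdet3).
have A1 : forall m : Idx ((N%:Z)%:M : 'M[int]_2), admissible ((N%:Z)%:M : 'M[int]_2) m <->
    (isZ (N'%:M *m symm_of m) /\ exists R0, goodP N'%:M (symm_of m) R0).
  by move=> m; rewrite -toQ1; exact: (adm_iff _ m hdet1).
have A2 : forall m : Idx C, admissible C m <->
    (isZ (Cq *m symm_of m) /\ exists R0, goodP Cq (symm_of m) R0).
  by move=> m; exact: (adm_iff _ m hdet).
have symZ : forall (a : rat) n0 (m : 'I_n0 * 'I_n0 * 'I_n0), (a *: symm_of m)^T = a *: symm_of m.
  by move=> a n0 m; rewrite trZ symm_of_sym.
have symD : forall n0 n2 (m : 'I_n0 * 'I_n0 * 'I_n0) (m' : 'I_n2 * 'I_n2 * 'I_n2),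
    (symm_of m + symm_of m')^T = symm_of m + symm_of m'.
  by move=> n0 n2 m m'; rewrite linearD /= !symm_of_sym.
have Fh' : forall m : Idx (N%:Z *: C), admissible (N%:Z *: C) m ->
    [/\ h (h' m) = m, admissible ((N%:Z)%:M : 'M[int]_2) (h' m).1 & admissible C (h' m).2].
  move=> m /A3 [hZ3 [R' hg]].
  have hA1 : isZ (symm_of (h' m).1 - (tq * c) *: symm_of m) by apply: omatE; [apply: symZ | apply: I2].
  have hA2 : isZ (symm_of (h' m).2 - (sq * N') *: symm_of m) by apply: omatE; [apply: symZ | apply: I3].
  have [hZ1 hg1] := P1 _ _ _ hg hZ3 hA1.
  have [hZ2 hg2] := P2 _ _ _ hg hZ3 hA2.
  split.
  - apply: symm_uniq; apply: (P3 _ _ _ _ _ hA1 hA2).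
    by apply: omatE; [apply: symD | apply: I1].
  - by apply/A1; split => //; exists (Cq^T *m R' *m Cq).
  - by apply/A2; split => //; exists (N' ^+ 2 *: R').

have hXZ : isZ X by rewrite hX -scalerA; apply: isZ_scale.
have hs2 : ((s ^+ 2)%:~R : rat) \is a Num.int by apply: intr_int.
have hs2E : ((s ^+ 2)%:~R : rat) = sq ^+ 2 by rewrite rmorphXn.
have Fh : forall j : Idx ((N%:Z)%:M : 'M[int]_2) * Idx C,
    admissible ((N%:Z)%:M : 'M[int]_2) j.1 -> admissible C j.2 ->
    [/\ admissible (N%:Z *: C) (h j), h' (h j) = j &
      ee R (\tr (toQ (Acomp (N%:Z *: C) (Dint (N%:Z *: C) (h j))) *m invmx (toQ (N%:Z *: C)) *m Q
             + invmx (toQ (N%:Z *: C)) *m toQ (Dint (N%:Z *: C) (h j)) *m T)) =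
      ee R (\tr (toQ (Acomp ((N%:Z)%:M : 'M[int]_2) (Dint ((N%:Z)%:M : 'M[int]_2) j.1))
                   *m invmx (toQ ((N%:Z)%:M : 'M[int]_2)) *m (X *m Q *m X^T)
             + invmx (toQ ((N%:Z)%:M : 'M[int]_2)) *m toQ (Dint ((N%:Z)%:M : 'M[int]_2) j.1) *m T)) *
      ee R (\tr (toQ (Acomp C (Dint C j.2)) *m invmx (toQ C) *m ((s ^+ 2)%:~R *: Q)
             + invmx (toQ C) *m toQ (Dint C j.2) *m T))].
  move=> j ha1 ha2.
  have /A1 [hZ1 [R1 hg1]] := ha1.
  have /A2 [hZ2 [R2 hg2]] := ha2.
  have hE : isZ (symm_of (h j) - (symm_of j.1 + symm_of j.2)).
    by apply: omatE; [apply: symD | apply: I1].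
  have [hZ3 hg3] := P4 _ _ _ _ _ hZ1 hg1 hZ2 hg2 hE.
  have ha3 : admissible (N%:Z *: C) (h j) by apply/A3; split => //; eexists; exact: hg3.
  split => //.
  - have hB1 : isZ (symm_of (h' (h j)).1 - (tq * c) *: symm_of (h j)).
      by apply: omatE; [apply: symZ | apply: I2].
    have hB2 : isZ (symm_of (h' (h j)).2 - (sq * N') *: symm_of (h j)).
      by apply: omatE; [apply: symZ | apply: I3].
    have e1 := symm_uniq _ _ _ (P5a _ _ _ _ hZ1 hZ2 hE hB1).
    have e2 := symm_uniq _ _ _ (P5b _ _ _ _ hZ1 hZ2 hE hB2).
    by rewrite [h' (h j)]surjective_pairing e1 e2 -surjective_pairing.
  - have hg3' := hg3; rewrite -toQ3 in hg3'.
    have hg1' := hg1; rewrite -toQ1 in hg1'.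
    rewrite (phase R _ _ Q T _ hdet3 ha3 hg3' hQ).
    rewrite (phase R _ _ (X *m Q *m X^T) T _ hdet1 ha1 hg1' (halfint_conj _ _ hXZ hQ)).
    rewrite (phase R _ _ ((s ^+ 2)%:~R *: Q) T _ hdet ha2 hg2 (halfint_scale _ _ hs2 hQ)).
    rewrite -ee_add hs2E hX (trace_split _ _ _ _ (symm_of j.1) (symm_of j.2)) [in LHS]ee_int //.
    apply: hT.
      by rewrite linearB /= symD symm_of_sym.
    exact: hE.

rewrite /K big_distrlr /= pair_big /=.
have H : forall m, `[< admissible (N%:Z *: C) m >] -> h (h' m) = m.
  by move=> m /asboolP /Fh' [].
rewrite (reindex_onto h h' H).
apply: eq_big => [j|j].
- apply/idP/idP.
  + case/andP => /asboolP h3 /eqP e.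
    have [_ a1 a2] := Fh' _ h3; rewrite e in a1 a2.
    by apply/andP; split; apply/asboolP.
  + case/andP => /asboolP a1 /asboolP a2.
    have [h3 e _] := Fh j a1 a2.
    by rewrite e eqxx andbT; apply/asboolP.
- case/andP => /asboolP h3 /eqP e.
  have [_ a1 a2] := Fh' _ h3; rewrite e in a1 a2.
  by have [_ _ ->] := Fh j a1 a2.
Qed.
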